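(* Let $f:H\to\mathbb{R}\cup\{+\infty\}$ be proper, lower semicontinuous, and have the K\L{} property at a global minimum $x^*$ of $f$. Fix $\underline a>0$ and $M>0$. Then there exist $\gamma>0$ and $\eta>0$ such that every sequence $(x^k)$ satisfying $\mathbf{H}_1$, $\mathbf{H}_2$, $\mathbf{H}_3$ with $\varepsilon_k=0$ for all $k$, $a_k\ge\underline a$ for all $k$, $\sup_{k\ge1}\frac{1}{a_kb_k}\le M$, and $x^0\in\underline{\Gamma}_\eta(x^*,\gamma)$, $f$-converges to a global minimum $\bar x$ of $f$ and satisfies $\sum_{k=0}^{+\infty}\|x^{k+1}-x^k\|<+\infty$.
   Context: Subdifferential $\partial f$ (limiting Fréchet), lazy slope $\|\partial f(x)\|_-=\inf_{p\in\partial f(x)}\|p\|$ ($+\infty$ if $\partial f(x)=\emptyset$), $f$-convergence ($x^k\to x$ and $f(x^k)\to f(x)$). A desingularizing function is a continuous concave $\varphi:[0,\eta_0[\to[0,+\infty[$ with $\varphi(0)=0$, $C^1$ on $]0,\eta_0[$ with $\varphi'>0$. $f$ has the K\L{} property at $x^*$ with desingularizing $\varphi$ if there is $\delta>0$ with $\varphi'(f(x)-f(x^* ))\|\partial f(x)\|_-\ge1$ for all $x\in\Gamma_{\eta_0}(x^*,\delta)=\{x:\|x-x^*\|<\delta,\ f(x^* )<f(x)<f(x^* )+\eta_0\}$. Relaxed local upper level set: $\underline{\Gamma}_\eta(x^*,\gamma)=\{x\in H:\|x-x^*\|<\gamma,\ f(x^* )\le f(x)<f(x^* )+\eta\}$.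 $\mathbf{H}_1$: $f(x^{k+1})+a_k\|x^{k+1}-x^k\|^2\le f(x^k)$, $a_k>0$. $\mathbf{H}_2$: $b_{k+1}\|\partial f(x^{k+1})\|_-\le\|x^{k+1}-x^k\|+\varepsilon_{k+1}$, $b_{k+1}>0$, $\varepsilon_{k+1}\ge0$. $\mathbf{H}_3$: (i) $a_k\ge\underline a>0$; (ii) $(b_k)\notin\ell^1$; (iii) $\sup_{k\ge1}\frac1{a_kb_k}<\infty$; (iv) $(\varepsilon_k)\in\ell^1$. *)

(* Defs.v *)
From Stdlib Require Import Reals Lra ClassicalEpsilon.
Open Scope R_scope.

Record Hilbert := {
  carrier :> Type;
  hzero : carrier;
  hplus : carrier -> carrier -> carrier;
  hopp : carrier -> carrier;
  hscal : R -> carrier -> carrier;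
  inner : carrier -> carrier -> R;
  hplus_assoc : forall x y z, hplus x (hplus y z) = hplus (hplus x y) z;
  hplus_comm : forall x y, hplus x y = hplus y x;
  hplus_zero : forall x, hplus x hzero = x;
  hplus_opp : forall x, hplus x (hopp x) = hzero;
  hscal_assoc : forall a b x, hscal a (hscal b x) = hscal (a * b) x;
  hscal_one : forall x, hscal 1 x = x;
  hscal_distr_l : forall a x y, hscal a (hplus x y) = hplus (hscal a x) (hscal a y);
  hscal_distr_r : forall a b x, hscal (a + b) x = hplus (hscal a x) (hscal b x);
  inner_sym : forall x y, inner x y = inner y x;
  inner_plus_l : forall x y z, inner (hplus x y) z = inner x z + inner y z;
  inner_scal_l : forall a x y, inner (hscal a x) y = a * inner x y;
  inner_pos : forall x, 0 <= inner x x;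
  inner_def : forall x, inner x x = 0 -> x = hzero;
  hcomplete : forall u : nat -> carrier,
    (forall eps, 0 < eps -> exists N, forall m n, (N <= m)%nat -> (N <= n)%nat ->
        sqrt (inner (hplus (u m) (hopp (u n))) (hplus (u m) (hopp (u n)))) < eps) ->
    exists l, forall eps, 0 < eps -> exists N, forall n, (N <= n)%nat ->
        sqrt (inner (hplus (u n) (hopp l)) (hplus (u n) (hopp l))) < eps
}.

Arguments hplus {h}. Arguments hopp {h}. Arguments inner {h}.

Definition hminus {H : Hilbert} (x y : H) : H := hplus x (hopp y).
Definition norm {H : Hilbert} (x : H) : R := sqrt (inner x x).

Lemma norm_nonneg {H : Hilbert} (x : H) : 0 <= norm x.
Proof. unfold norm; apply sqrt_pos. Qed.

Definition hcv {H : Hilbert} (u : nat -> H) (l : H) : Prop :=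
  forall eps, 0 < eps -> exists N, forall n, (N <= n)%nat -> norm (hminus (u n) l) < eps.

Inductive ereal := Fin : R -> ereal | PInf : ereal.

Definition ele (x y : ereal) : Prop :=
  match x, y with
  | Fin a, Fin b => a <= b
  | _, PInf => True
  | PInf, Fin _ => False
  end.

Definition elt (x y : ereal) : Prop :=
  match x, y with
  | Fin a, Fin b => a < b
  | Fin _, PInf => True
  | PInf, _ => False
  end.

Definition eplus (e : ereal) (r : R) : ereal :=
  match e with Fin a => Fin (a + r) | PInf => PInf end.

(* c * e for a real c > 0 (with c * (+oo) = +oo) *)
Definition emul_pos (c : R) (e : ereal) : ereal :=
  match e with Fin a => Fin (c * a) | PInf => PInf end.

Definition ecv (u : nat -> ereal) (l : ereal) : Prop :=
  match l with
  | Fin L => forall eps, 0 < eps -> exists N, forall n, (N <= n)%nat ->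
               exists r, u n = Fin r /\ Rabs (r - L) < eps
  | PInf => forall M, exists N, forall n, (N <= n)%nat -> elt (Fin M) (u n)
  end.

Definition proper {H : Hilbert} (f : H -> ereal) : Prop := exists x, f x <> PInf.

Definition lsc {H : Hilbert} (f : H -> ereal) : Prop :=
  forall x r, elt (Fin r) (f x) ->
    exists delta, 0 < delta /\ forall y, norm (hminus y x) < delta -> elt (Fin r) (f y).

Definition global_min {H : Hilbert} (f : H -> ereal) (xs : H) : Prop :=
  forall y, ele (f xs) (f y).

(* Frechet subdifferential: p such that
   liminf_{y->x, y<>x} (f y - f x - <p, y - x>)/||y - x|| >= 0, x in dom f *)
Definition frechet_subdiff {H : Hilbert} (f : H -> ereal) (x p : H) : Prop :=
  match f x with
  | Fin fx => forall eps, 0 < eps -> exists delta, 0 < delta /\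
      forall y, norm (hminus y x) < delta ->
        ele (Fin (fx + inner p (hminus y x) - eps * norm (hminus y x))) (f y)
  | PInf => False
  end.

Definition subdiff {H : Hilbert} (f : H -> ereal) (x p : H) : Prop :=
  f x <> PInf /\
  exists (xn pn : nat -> H),
    hcv xn x /\ ecv (fun n => f (xn n)) (f x) /\
    (forall n, frechet_subdiff f (xn n) (pn n)) /\ hcv pn p.

(* lazy slope ||∂f(x)||_- = inf { ||p|| : p ∈ ∂f(x) }, +oo if ∂f(x) = ∅ *)
Section Slope.
Context {H : Hilbert} (f : H -> ereal) (x : H).
Let E : R -> Prop := fun r => exists p, subdiff f x p /\ r = - norm p.
Let E_bound : bound E.
Proof. exists 0. intros r [p [_ ->]]. pose proof (norm_nonneg p). lra. Qed.
Let E_ne : (exists p, subdiff f x p) -> exists r, E r.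
Proof. intros [p hp]. exists (- norm p). exists p. split; auto. Qed.
Definition lazy_slope : ereal :=
  match excluded_middle_informative (exists p, subdiff f x p) with
  | left h => Fin (- proj1_sig (completeness E E_bound (E_ne h)))
  | right _ => PInf
  end.
End Slope.

Definition desingularizing (eta0 : R) (phi dphi : R -> R) : Prop :=
  0 < eta0 /\
  phi 0 = 0 /\
  (forall t, 0 <= t < eta0 -> 0 <= phi t) /\
  (forall t, 0 <= t < eta0 -> forall eps, 0 < eps -> exists delta, 0 < delta /\
      forall s, 0 <= s < eta0 -> Rabs (s - t) < delta -> Rabs (phi s - phi t) < eps) /\
  (forall s t lam, 0 <= s < eta0 -> 0 <= t < eta0 -> 0 <= lam <= 1 ->
      lam * phi s + (1 - lam) * phi t <= phi (lam * s + (1 - lam) * t)) /\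
  (forall t, 0 < t < eta0 ->
      derivable_pt_lim phi t (dphi t) /\ continuity_pt dphi t /\ 0 < dphi t).

Definition Gamma {H : Hilbert} (f : H -> ereal) (xs : H) (eta delta : R) (x : H) : Prop :=
  norm (hminus x xs) < delta /\ elt (f xs) (f x) /\ elt (f x) (eplus (f xs) eta).

Definition Gamma_relaxed {H : Hilbert} (f : H -> ereal) (xs : H) (eta gamma : R) (x : H) : Prop :=
  norm (hminus x xs) < gamma /\ ele (f xs) (f x) /\ elt (f x) (eplus (f xs) eta).

Definition KL_at {H : Hilbert} (f : H -> ereal) (xs : H) : Prop :=
  exists eta0 phi dphi delta,
    desingularizing eta0 phi dphi /\ 0 < delta /\
    forall x, Gamma f xs eta0 delta x ->
      forall r s, f x = Fin r -> f xs = Fin s ->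
        ele (Fin 1) (emul_pos (dphi (r - s)) (lazy_slope f x)).

Definition f_converges {H : Hilbert} (f : H -> ereal) (u : nat -> H) (l : H) : Prop :=
  hcv u l /\ ecv (fun k => f (u k)) (f l).

(* Main.v *)
Require Import Defs.
From Stdlib Require Import Reals Lra Psatz Classical.
Open Scope R_scope.

Lemma inner_zero_l {H : Hilbert} (y : H) : inner (hzero H) y = 0.
Proof.
  pose proof (inner_plus_l H (hzero H) (hzero H) y) as E.
  rewrite hplus_zero in E. lra.
Qed.

Lemma inner_plus_r {H : Hilbert} (x y z : H) : inner x (hplus y z) = inner x y + inner x z.
Proof. rewrite inner_sym, inner_plus_l, (inner_sym H y), (inner_sym H z). reflexivity. Qed.

Lemma inner_scal_r {H : Hilbert} a (x y : H) : inner x (hscal H a y) = a * inner x y.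
Proof. rewrite inner_sym, inner_scal_l, inner_sym. reflexivity. Qed.

Lemma hminus_add {H : Hilbert} (x y z : H) : hplus (hminus x y) (hminus y z) = hminus x z.
Proof.
  unfold hminus. rewrite hplus_assoc. f_equal.
  rewrite <- hplus_assoc, (hplus_comm H (hopp y) y), hplus_opp, hplus_zero. reflexivity.
Qed.

Lemma opp_unique {H : Hilbert} (a b : H) : hplus a b = hzero H -> b = hopp a.
Proof.
  intro E. rewrite <- (hplus_zero H b), <- (hplus_opp H a), hplus_assoc,
    (hplus_comm H b a), E, hplus_comm, hplus_zero. reflexivity.
Qed.

Lemma inner_opp_l {H : Hilbert} (x y : H) : inner (hopp x) y = - inner x y.
Proof.
  pose proof (inner_plus_l H x (hopp x) y) as E. rewrite hplus_opp, inner_zero_l in E. lra.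
Qed.

Lemma norm_sym {H : Hilbert} (x y : H) : norm (hminus x y) = norm (hminus y x).
Proof.
  assert (E : hminus y x = hopp (hminus x y)).
  { apply opp_unique. rewrite hminus_add. unfold hminus. apply hplus_opp. }
  rewrite E. unfold norm. rewrite inner_opp_l, (inner_sym H (hminus x y) (hopp _)), inner_opp_l. f_equal. ring.
Qed.

Lemma norm_self {H : Hilbert} (x : H) : norm (hminus x x) = 0.
Proof. unfold norm, hminus. rewrite hplus_opp, inner_zero_l. apply sqrt_0. Qed.

Lemma cauchy_schwarz {H : Hilbert} (u v : H) : inner u v <= norm u * norm v.
Proof.
  unfold norm.
  pose proof (inner_pos H u) as Hu. pose proof (inner_pos H v) as Hv.
  destruct (Req_dec (inner v v) 0) as [E|E].
  - apply inner_def in E. subst v. rewrite inner_sym, inner_zero_l.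
    apply Rmult_le_pos; apply sqrt_pos.
  - assert (Hvp : 0 < inner v v) by lra.
    set (t := - inner u v / inner v v).
    pose proof (inner_pos H (hplus u (hscal H t v))) as Hq.
    rewrite inner_plus_l, !inner_plus_r, !inner_scal_l, !inner_scal_r in Hq.
    rewrite (inner_sym H v u) in Hq.
    assert (Htv : t * inner v v = - inner u v) by (unfold t; field; lra).
    assert (Hq2 : 0 <= inner v v * (inner u u + inner u v * t + t * (inner u v + t * inner v v)))
      by (apply Rmult_le_pos; lra).
    replace (inner v v * (inner u u + inner u v * t + t * (inner u v + t * inner v v)))
      with (inner v v * inner u u + 2 * (t * inner v v) * inner u v + (t * inner v v) * (t * inner v v)) in Hq2 by ring.
    rewrite Htv in Hq2.
    rewrite <- sqrt_mult by lra.
    destruct (Rle_dec (inner u v) 0). { pose proof (sqrt_pos (inner u u * inner v v)). lra. }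
    rewrite <- (sqrt_square (inner u v)) by lra.
    apply sqrt_le_1_alt. nra.
Qed.

Lemma norm_plus {H : Hilbert} (u v : H) : norm (hplus u v) <= norm u + norm v.
Proof.
  pose proof (cauchy_schwarz u v) as C.
  pose proof (norm_nonneg u). pose proof (norm_nonneg v).
  unfold norm at 1. rewrite <- (sqrt_square (norm u + norm v)) by lra.
  apply sqrt_le_1_alt.
  rewrite inner_plus_l, !inner_plus_r, (inner_sym H v u).
  assert (Eu : norm u * norm u = inner u u) by (unfold norm; apply sqrt_sqrt, inner_pos).
  assert (Ev : norm v * norm v = inner v v) by (unfold norm; apply sqrt_sqrt, inner_pos).
  nra.
Qed.

Lemma norm_tri {H : Hilbert} (x y z : H) :
  norm (hminus x z) <= norm (hminus x y) + norm (hminus y z).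
Proof. rewrite <- (hminus_add x y z). apply norm_plus. Qed.
Lemma tangent eta0 phi dphi : desingularizing eta0 phi dphi ->
  forall s t, 0 <= s < eta0 -> 0 < t < eta0 -> phi s <= phi t + dphi t * (s - t).
Proof.
  intros (He & H0 & Hpos & Hc & Hconc & Hd) s t Hs Ht.
  destruct (Req_dec s t) as [->|Hne]. { lra. }
  apply Rnot_lt_le; intro Hlt.
  set (e := phi s - phi t - dphi t * (s - t)).
  assert (He0 : 0 < e) by (unfold e; lra).
  assert (Hst : 0 < Rabs (s - t)) by (apply Rabs_pos_lt; lra).
  destruct (Hd t Ht) as [Hdl _].
  destruct (Hdl (e / (2 * Rabs (s - t)))) as [del Hdel].
  { apply Rdiv_lt_0_compat; lra. }
  pose proof (cond_pos del) as Hdelp.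
  set (lam := Rmin 1 (del / (2 * Rabs (s - t)))).
  assert (Hl0 : 0 < lam) by (unfold lam; apply Rmin_glb_lt; [lra| apply Rdiv_lt_0_compat; lra]).
  assert (Hl1 : lam <= 1) by apply Rmin_l.
  assert (Hl2 : lam <= del / (2 * Rabs (s - t))) by apply Rmin_r.
  set (h := lam * (s - t)).
  assert (Hh0 : h <> 0) by (unfold h; apply Rmult_integral_contrapositive; split; lra).
  assert (Hhabs : Rabs h = lam * Rabs (s - t)) by (unfold h; rewrite Rabs_mult, Rabs_pos_eq; lra).
  assert (Hhd : Rabs h < del).
  { rewrite Hhabs. apply Rle_lt_trans with (del / (2 * Rabs (s - t)) * Rabs (s - t)).
    - apply Rmult_le_compat_r; lra.
    - replace (del / (2 * Rabs (s - t)) * Rabs (s - t)) with (del / 2) by (field; lra). lra. }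
  specialize (Hdel h Hh0 Hhd).
  pose proof (Hconc s t lam Hs (conj (Rlt_le _ _ (proj1 Ht)) (proj2 Ht)) (conj (Rlt_le _ _ Hl0) Hl1)) as Hc1.
  replace (lam * s + (1 - lam) * t) with (t + h) in Hc1 by (unfold h; ring).
  set (q := (phi (t + h) - phi t) / h - dphi t) in Hdel.
  assert (Hqh : q * h = phi (t + h) - phi t - dphi t * h) by (unfold q; field; auto).
  assert (Hq2 : Rabs (q * h) < lam * e / 2).
  { rewrite Rabs_mult, Hhabs.
    apply Rlt_le_trans with (e / (2 * Rabs (s - t)) * (lam * Rabs (s - t))).
    - apply Rmult_lt_compat_r; [apply Rmult_lt_0_compat; lra | exact Hdel].
    - right. field. lra. }
  pose proof (Rle_abs (q * h)).
  assert (lam * (phi s - phi t) <= phi (t + h) - phi t) by lra.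
  assert (lam * (phi s - phi t) = dphi t * h + lam * e) by (unfold h, e; ring).
  assert (0 < lam * e) by (apply Rmult_lt_0_compat; lra).
  lra.
Qed.

Lemma dphi_mono eta0 phi dphi : desingularizing eta0 phi dphi ->
  forall t u, 0 < t -> t <= u -> u < eta0 -> dphi u <= dphi t.
Proof.
  intros D t u Ht Htu Hu.
  destruct (Req_dec t u) as [->|Hne]. { lra. }
  pose proof (tangent _ _ _ D u t ltac:(lra) ltac:(lra)).
  pose proof (tangent _ _ _ D t u ltac:(lra) ltac:(lra)).
  assert (0 <= (dphi t - dphi u) * (u - t)) by lra.
  destruct (Rle_dec (dphi u) (dphi t)); auto. nra.
Qed.

Fixpoint psum (d : nat -> R) (m : nat) : R :=
  match m with O => 0 | S m' => psum d m' + d m' end.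

Lemma psum_S d n : psum d (S n) = sum_f_R0 d n.
Proof. induction n; simpl in *; [ring | rewrite <- IHn; reflexivity]. Qed.

Definition dd {H : Hilbert} (x : nat -> H) (k : nat) : R := norm (hminus (x (S k)) (x k)).
Definition Fv {H : Hilbert} (f : H -> ereal) (x : nat -> H) (k : nat) : R :=
  match f (x k) with Fin r => r | PInf => 0 end.

Lemma dist_psum {H : Hilbert} (x : nat -> H) :
  forall n m, (n <= m)%nat -> norm (hminus (x m) (x n)) <= psum (dd x) m - psum (dd x) n.
Proof.
  intros n m Hnm. induction m.
  - assert (n = 0%nat) by lia. subst. rewrite norm_self. simpl. lra.
  - destruct (Nat.eq_dec n (S m)) as [->|Hne].
    + rewrite norm_self. lra.
    + specialize (IHm ltac:(lia)). simpl.
      pose proof (norm_tri (x (S m)) (x m) (x n)). change (norm (hminus (x (S m)) (x m))) with (dd x m) in *. lra.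
Qed.

Lemma dd_nonneg {H : Hilbert} (x : nat -> H) k : 0 <= dd x k.
Proof. apply norm_nonneg. Qed.

Theorem mainTheorem3 (H : Hilbert) (f : H -> ereal) (xs : H)
  (Hprop : proper f) (Hlsc : lsc f) (Hmin : global_min f xs) (HKL : KL_at f xs)
  (a_low M : R) (Ha_low : 0 < a_low) (HM : 0 < M) :
  exists gamma eta, 0 < gamma /\ 0 < eta /\
    forall (x : nat -> H) (a b : nat -> R),
      (forall k, 0 < a k) ->
      (forall k, ele (eplus (f (x (S k))) (a k * (norm (hminus (x (S k)) (x k)))^2)) (f (x k))) ->
      (forall k, 0 < b (S k)) ->
      (forall k, ele (emul_pos (b (S k)) (lazy_slope f (x (S k))))
                     (Fin (norm (hminus (x (S k)) (x k))))) ->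
      (forall k, a_low <= a k) ->
      (forall B, exists N, B < sum_f_R0 (fun k => b (S k)) N) ->
      (forall k, (1 <= k)%nat -> 1 / (a k * b k) <= M) ->
      Gamma_relaxed f xs eta gamma (x 0%nat) ->
      exists xbar, global_min f xbar /\ f_converges f x xbar /\
        exists Ssum, Un_cv (fun N => sum_f_R0 (fun k => norm (hminus (x (S k)) (x k))) N) Ssum.
Proof.
  destruct HKL as (eta0 & phi & dphi & delta & Hdes & Hdelta & HKLi).
  assert (Hfs : exists fs, f xs = Fin fs).
  { destruct Hprop as [z hz]. specialize (Hmin z). destruct (f xs) as [fs|]; [eauto|].
    destruct (f z); simpl in Hmin; [contradiction | congruence]. }
  destruct Hfs as [fs Hfs].
  pose proof Hdes as Hdes'.
  destruct Hdes' as (Heta0 & Hphi0 & Hphipos & Hcont & Hconc & Hder).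
  destruct (Hcont 0 (conj (Rle_refl 0) Heta0) (delta / (4 * M))) as (dp & Hdp & Hdpc).
  { apply Rdiv_lt_0_compat; lra. }
  set (eta := Rmin eta0 (Rmin (a_low * delta ^ 2 / 64) dp)).
  assert (Heta_pos : 0 < eta).
  { unfold eta. apply Rmin_glb_lt; [lra|]. apply Rmin_glb_lt; [|lra].
    apply Rdiv_lt_0_compat; [|lra]. apply Rmult_lt_0_compat; [lra|]. apply pow_lt; lra. }
  assert (He1 : eta <= eta0) by apply Rmin_l.
  assert (He2 : eta <= a_low * delta ^ 2 / 64) by (eapply Rle_trans; [apply Rmin_r| apply Rmin_l]).
  assert (He3 : eta <= dp) by (eapply Rle_trans; [apply Rmin_r| apply Rmin_r]).
  exists (delta / 4), eta. split; [lra|]. split; [exact Heta_pos|].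
  intros x a b Ha H1 Hb H2 Hal Hdiv HMab Hx0.
  set (F := Fv f x). set (d := dd x).
  assert (HF : forall k, f (x k) = Fin (F k)).
  { induction k.
    - destruct Hx0 as (_ & _ & Hx0). unfold F, Fv. rewrite Hfs in Hx0.
      destruct (f (x 0%nat)); simpl in Hx0; [reflexivity|contradiction].
    - specialize (H1 k). rewrite IHk in H1. unfold F, Fv.
      destruct (f (x (S k))); simpl in H1; [reflexivity|contradiction]. }
  assert (Hdec : forall k, F (S k) + a k * d k ^ 2 <= F k).
  { intro k. specialize (H1 k). rewrite !HF in H1. exact H1. }
  assert (Hlow : forall k, fs <= F k).
  { intro k. specialize (Hmin (x k)). rewrite Hfs, HF in Hmin. exact Hmin. }
  assert (Hdn : forall k, 0 <= d k) by (intro; apply dd_nonneg).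
  assert (Hmono : forall k n, (k <= n)%nat -> F n <= F k).
  { intros k n Hkn. induction n.
    - assert (k = 0%nat) by lia. subst. lra.
    - destruct (Nat.eq_dec k (S n)) as [->|Hne]; [lra|].
      specialize (IHn ltac:(lia)). pose proof (Hdec n). pose proof (Ha n).
      pose proof (pow2_ge_0 (d n)). nra. }
  destruct Hx0 as (Hx0n & _ & Hx0f). rewrite Hfs, HF in Hx0f. simpl in Hx0f.
  assert (Hr : forall k, 0 <= F k - fs < eta).
  { intro k. pose proof (Hmono 0%nat k ltac:(lia)). pose proof (Hlow k). lra. }
  assert (Hd0 : d 0%nat <= delta / 8).
  { pose proof (Hdec 0%nat). pose proof (Hal 0%nat). pose proof (Hlow 1%nat).
    pose proof (Hr 0%nat). pose proof (Hdn 0%nat).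
    assert (a_low * d 0%nat ^ 2 <= a_low * delta ^ 2 / 64).
    { apply Rle_trans with (a 0%nat * d 0%nat ^ 2). { apply Rmult_le_compat_r; [apply pow2_ge_0|lra]. } lra. }
    assert (d 0%nat ^ 2 <= (delta / 8) ^ 2) by nra.
    destruct (Rle_dec (d 0%nat) (delta / 8)); auto. nra. }
  assert (Hphi1 : M * phi (F 1%nat - fs) < delta / 4).
  { pose proof (Hr 1%nat).
    specialize (Hdpc (F 1%nat - fs) ltac:(lra) ltac:(rewrite Rminus_0_r, Rabs_pos_eq; lra)).
    rewrite Hphi0, Rminus_0_r in Hdpc.
    pose proof (Rle_abs (phi (F 1%nat - fs))).
    assert (phi (F 1%nat - fs) < delta / (4 * M)) by lra.
    apply Rlt_le_trans with (M * (delta / (4 * M))). { apply Rmult_lt_compat_l; lra. }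
    right. field. lra. }
  assert (HKLk : forall j, norm (hminus (x (S j)) xs) < delta -> 0 < F (S j) - fs ->
            exists sg, 0 < sg /\ 1 <= dphi (F (S j) - fs) * sg /\ b (S j) * sg <= d j).
  { intros j Hb1 Hpos.
    assert (G : Gamma f xs eta0 delta (x (S j))).
    { unfold Gamma. rewrite HF, Hfs. simpl. pose proof (Hr (S j)). repeat split; lra. }
    specialize (HKLi _ G (F (S j)) fs (HF _) Hfs).
    pose proof (H2 j) as H2j.
    assert (Hdpp : 0 < dphi (F (S j) - fs)) by (pose proof (Hr (S j)); destruct (Hder (F (S j) - fs) ltac:(lra)) as (_ & _ & ?); assumption).
    destruct (lazy_slope f (x (S j))) as [sg|]; simpl in HKLi, H2j; [|contradiction].
    exists sg. assert (0 < sg) by nra. split; [lra|]. split; [lra|]. exact H2j. }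
  assert (Hkey : forall j, norm (hminus (x (S j)) xs) < delta ->
            2 * d (S j) <= d j + M * (phi (F (S j) - fs) - phi (F (S (S j)) - fs))).
  { intros j Hb1. pose proof (Hr (S j)) as Hr1. pose proof (Hr (S (S j))) as Hr2.
    pose proof (Hdec (S j)) as Hdc. pose proof (Ha (S j)) as Haj. pose proof (Hdn (S j)). pose proof (Hdn j).
    destruct (Req_dec (F (S j) - fs) 0) as [E0|Ep].
    - assert (0 <= a (S j) * d (S j) ^ 2) by (apply Rmult_le_pos; [lra|apply pow2_ge_0]).
      assert (E1 : F (S (S j)) - fs = 0) by (pose proof (Hlow (S (S j))); lra).
      rewrite E0, E1. assert (a (S j) * d (S j) ^ 2 <= 0) by lra.
      assert (d (S j) = 0).
      { destruct (Rle_lt_dec (d (S j)) 0); [lra|].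
        assert (0 < a (S j) * d (S j) ^ 2) by (apply Rmult_lt_0_compat; [lra| apply pow_lt; lra]). lra. }
      lra.
    - destruct (HKLk j Hb1 ltac:(lra)) as (sg & Hsg & Hg1 & Hg2).
      set (g := dphi (F (S j) - fs)) in *.
      assert (Hg : 0 < g) by (destruct (Hder (F (S j) - fs) ltac:(lra)) as (_ & _ & ?); assumption).
      pose proof (tangent _ _ _ Hdes (F (S (S j)) - fs) (F (S j) - fs) ltac:(lra) ltac:(lra)) as Ht.
      fold g in Ht.
      set (P := phi (F (S j) - fs) - phi (F (S (S j)) - fs)).
      set (A := a (S j)) in *. set (B := b (S j)) in *. set (D := d j) in *. set (e := d (S j)) in *.
      assert (HP : g * A * e ^ 2 <= P).
      { unfold P. assert (g * (A * e ^ 2) <= g * (F (S j) - F (S (S j)))) by (apply Rmult_le_compat_l; lra). nra. }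
      assert (HB : 0 < B) by apply Hb.
      assert (HMAB : 1 <= M * A * B).
      { pose proof (HMab (S j) ltac:(lia)) as Hm. fold A B in Hm.
        assert (0 < A * B) by (apply Rmult_lt_0_compat; lra).
        apply Rmult_le_compat_r with (r := A * B) in Hm; [|lra].
        replace (1 / (A * B) * (A * B)) with 1 in Hm by (field; lra). lra. }
      assert (HD : 0 < D) by nra.
      assert (HMPD : e ^ 2 <= M * P * D).
      { assert (h1 : M * g * A * e ^ 2 * (B * sg) <= M * P * D).
        { apply Rle_trans with (M * (g * A * e ^ 2) * D).
          - assert (0 <= M * (g * A * e ^ 2)) by (apply Rmult_le_pos; [lra|]; apply Rmult_le_pos; [nra| apply pow2_ge_0]).
            replace (M * g * A * e ^ 2 * (B * sg)) with (M * (g * A * e ^ 2) * (B * sg)) by ring.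
            apply Rmult_le_compat_l; lra.
          - apply Rmult_le_compat_r; [lra|]. apply Rmult_le_compat_l; lra. }
        replace (M * g * A * e ^ 2 * (B * sg)) with ((M * A * B) * (g * sg) * e ^ 2) in h1 by ring.
        assert (1 * 1 * e ^ 2 <= M * A * B * (g * sg) * e ^ 2).
        { apply Rmult_le_compat_r; [apply pow2_ge_0|]. apply Rmult_le_compat; lra. }
        lra. }
      assert (Hsq : 0 <= (D - e) ^ 2) by apply pow2_ge_0.
      assert (Hx : 2 * e * D <= (D + M * P) * D).
      { replace ((D + M * P) * D) with (D ^ 2 + M * P * D) by ring.
        replace ((D - e) ^ 2) with (D ^ 2 - 2 * e * D + e ^ 2) in Hsq by ring. lra. }
      apply Rmult_le_reg_r with D; lra. }
  set (T := fun n => sum_f_R0 d n).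
  assert (Hbal : forall n, (forall k, (k <= n)%nat -> norm (hminus (x k) xs) < delta) ->
            T n + d n <= 2 * d 0%nat + M * (phi (F 1%nat - fs) - phi (F (S n) - fs))).
  { induction n; intro Hk.
    - unfold T. simpl. lra.
    - specialize (IHn (fun k Hk' => Hk k ltac:(lia))).
      pose proof (Hkey n (Hk (S n) ltac:(lia))).
      unfold T in *. simpl. lra. }
  assert (Htri : forall n, norm (hminus (x (S n)) xs) <= norm (hminus (x 0%nat) xs) + T n).
  { induction n.
    - unfold T. simpl. pose proof (norm_tri (x 1%nat) (x 0%nat) xs). unfold d, dd. lra.
    - pose proof (norm_tri (x (S (S n))) (x (S n)) xs). unfold T in *. simpl.
      change (norm (hminus (x (S (S n))) (x (S n)))) with (d (S n)) in *. lra. }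
  assert (Hball : forall n k, (k <= n)%nat -> norm (hminus (x k) xs) < delta).
  { induction n; intros k Hk.
    - assert (k = 0%nat) by lia. subst. lra.
    - destruct (Nat.eq_dec k (S n)) as [->|Hne]; [|apply IHn; lia].
      pose proof (Hbal n IHn). pose proof (Htri n). pose proof (Hdn n).
      pose proof (Hphipos (F (S n) - fs) ltac:(pose proof (Hr (S n)); lra)).
      assert (M * phi (F (S n) - fs) >= 0) by (apply Rle_ge, Rmult_le_pos; lra).
      lra. }
  set (Bd := 2 * d 0%nat + M * phi (F 1%nat - fs)).
  assert (HT : forall n, T n <= Bd).
  { intro n. pose proof (Hbal n (Hball n)). pose proof (Hdn n).
    pose proof (Hphipos (F (S n) - fs) ltac:(pose proof (Hr (S n)); lra)).
    assert (M * phi (F (S n) - fs) >= 0) by (apply Rle_ge, Rmult_le_pos; lra).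
    unfold Bd. lra. }
  assert (HS : {Ssum | Un_cv T Ssum}).
  { apply growing_cv.
    - intro n. unfold T. simpl. pose proof (Hdn (S n)). lra.
    - exists Bd. intros y [n ->]. apply HT. }
  destruct HS as [Ssum HSc].
  assert (Hcau : forall eps, 0 < eps -> exists N, forall m n, (N <= m)%nat -> (N <= n)%nat ->
            norm (hminus (x m) (x n)) < eps).
  { intros eps Heps. destruct (HSc (eps / 2) ltac:(lra)) as [N HN].
    exists (S N). intros m n Hm Hn.
    assert (Hp : forall k, (S N <= k)%nat -> Rabs (psum (dd x) k - Ssum) < eps / 2).
    { intros k Hk. destruct k as [|k]; [lia|]. rewrite psum_S. apply HN. lia. }
    pose proof (Hp m Hm) as Pm. pose proof (Hp n Hn) as Pn.
    apply Rabs_def2 in Pm. apply Rabs_def2 in Pn.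
    destruct (Nat.le_ge_cases n m) as [Hnm|Hmn].
    - pose proof (dist_psum x n m Hnm). lra.
    - rewrite norm_sym. pose proof (dist_psum x m n Hmn). lra. }
  destruct (hcomplete H x Hcau) as [xbar Hxbar].
  change (hcv x xbar) in Hxbar.
  assert (Hr0 : forall eps, 0 < eps -> exists N, forall n, (N <= n)%nat -> F n - fs < eps).
  { destruct (classic (forall c, 0 < c -> exists k, F k - fs < c)) as [Hy|Hn].
    - intros eps Heps. destruct (Hy eps Heps) as [k Hk]. exists k. intros n Hkn.
      pose proof (Hmono k n Hkn). lra.
    - exfalso. apply not_all_ex_not in Hn. destruct Hn as [c Hc].
      apply imply_to_and in Hc. destruct Hc as [Hc0 Hc].
      assert (Hcall : forall k, c <= F k - fs).
      { intro k. apply Rnot_lt_le. intro Hlt. apply Hc. eauto. }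
      assert (Hpt : forall k, b (S k) <= dphi c * d k).
      { intro k. pose proof (Hcall (S k)). pose proof (Hr (S k)).
        destruct (HKLk k (Hball (S k) (S k) (le_n _)) ltac:(lra)) as (sg & Hsg & Hg1 & Hg2).
        pose proof (dphi_mono _ _ _ Hdes c (F (S k) - fs) Hc0 ltac:(lra) ltac:(lra)).
        pose proof (Hb k).
        assert (b (S k) * 1 <= b (S k) * (dphi (F (S k) - fs) * sg)) by (apply Rmult_le_compat_l; lra).
        assert (dphi (F (S k) - fs) * (b (S k) * sg) <= dphi (F (S k) - fs) * d k).
        { apply Rmult_le_compat_l; [|lra].
          destruct (Hder (F (S k) - fs) ltac:(lra)) as (_ & _ & ?); lra. }
        assert (dphi (F (S k) - fs) * d k <= dphi c * d k) by (apply Rmult_le_compat_r; auto).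
        nra. }
      assert (Hsum : forall N, sum_f_R0 (fun k => b (S k)) N <= dphi c * T N).
      { induction N; unfold T in *; simpl; [apply Hpt|]. pose proof (Hpt (S N)). lra. }
      destruct (Hdiv (dphi c * Bd)) as [N HN].
      pose proof (Hsum N). pose proof (HT N).
      assert (0 < dphi c) by (destruct (Hder c ltac:(pose proof (Hr 0%nat); pose proof (Hcall 0%nat); lra)) as (_ & _ & ?); lra).
      assert (dphi c * T N <= dphi c * Bd) by (apply Rmult_le_compat_l; lra).
      lra. }
  assert (Hfx : f xbar = Fin fs).
  { pose proof (Hmin xbar) as Hm. rewrite Hfs in Hm.
    assert (Hgen : forall r, fs < r -> elt (Fin r) (f xbar) -> False).
    { intros r Hr' Hel. destruct (Hlsc xbar r Hel) as (dl & Hdl & Hy).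
      destruct (Hxbar dl Hdl) as [N1 HN1]. destruct (Hr0 (r - fs) ltac:(lra)) as [N2 HN2].
      specialize (HN1 (max N1 N2) ltac:(lia)). specialize (HN2 (max N1 N2) ltac:(lia)).
      specialize (Hy _ HN1). rewrite HF in Hy. simpl in Hy. lra. }
    destruct (f xbar) as [v|] eqn:Ev.
    - simpl in Hm. destruct (Req_dec v fs) as [->|Hne]; [reflexivity|].
      exfalso. apply (Hgen ((fs + v) / 2)); simpl; lra.
    - exfalso. apply (Hgen (fs + 1)); simpl; [lra|exact I]. }
  exists xbar. split; [|split].
  - intro y. rewrite Hfx, <- Hfs. apply Hmin.
  - split; [exact Hxbar|]. rewrite Hfx. simpl. intros eps Heps.
    destruct (Hr0 eps Heps) as [N HN]. exists N. intros n Hn. exists (F n). split; [apply HF|].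
    pose proof (Hr n). rewrite Rabs_pos_eq; [apply HN; auto| lra].
  - exists Ssum. exact HSc.
Qed.
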